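(* Let $a, w \in \mathbb{R}$ with $w < -|a|$, and let $\tau_c(a,w) := \frac{1}{\sqrt{w^2-a^2}}\arccos(a/w)$. Then $\tau_c(a,w) > 1$ if and only if $a > -1$ and $-R(-a) < w$.
   Context: $\arccos:[-1,1]\to[0,\pi]$. $C(\theta) := \theta\cot\theta$ for $\theta\in(0,\pi)$ is a strictly decreasing bijection from $(0,\pi)$ onto $(-\infty,1)$ with inverse $C^{-1}$; $R(r) := C^{-1}(r)/\sin C^{-1}(r)$ for $r<1$. *)

(* Defs.v *)
From Stdlib Require Import Reals Lra ClassicalEpsilon.
Open Scope R_scope.

Definition Cfun (t : R) : R := t * cos t / sin t.

(** C^{-1}(r): the (unique, for r < 1) theta in (0,pi) with C theta = r.
    Chosen by Hilbert's epsilon; only meaningful for r < 1. *)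
Definition Cinv (r : R) : R :=
  epsilon (inhabits 0) (fun t => 0 < t < PI /\ Cfun t = r).

Definition Rfun (r : R) : R := Cinv r / sin (Cinv r).

Definition tau_c (a w : R) : R := acos (a / w) / sqrt (w ^ 2 - a ^ 2).

(* Main.v *)
Require Import Defs.
From Stdlib Require Import Reals.
From Stdlib Require Import Lra Psatz ClassicalEpsilon.
From Coquelicot Require Import Coquelicot.
Open Scope R_scope.

Lemma sin_pos_0PI t : 0 < t < PI -> 0 < sin t.
Proof. intros [h1 h2]. apply sin_gt_0; lra. Qed.

Lemma k_pos t : 0 < t < PI -> t * cos t < sin t.
Proof.
  intros Ht.
  destruct (MVT_cor2 (fun t => sin t - t * cos t) (fun t => t * sin t) 0 t)
    as [c [Hc1 Hc2]].
  - lra.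
  - intros c _. apply is_derive_Reals. auto_derive; auto. ring.
  - simpl in Hc1. rewrite sin_0, cos_0 in Hc1.
    assert (0 < sin c) by (apply sin_pos_0PI; lra).
    assert (0 < c * sin c * (t - 0)) by (apply Rmult_lt_0_compat; [apply Rmult_lt_0_compat|]; lra).
    lra.
Qed.

Lemma Cfun_mul t : 0 < t < PI -> Cfun t * sin t = t * cos t.
Proof.
  intros Ht. pose proof (sin_pos_0PI t Ht). unfold Cfun. field. lra.
Qed.

Lemma C_decr x y : 0 < x -> x < y -> y < PI -> Cfun y < Cfun x.
Proof.
  intros h1 h2 h3.
  destruct (MVT_cor2 Cfun (fun t => (sin t * cos t - t) / (sin t)^2) x y)
    as [c [Hc1 Hc2]].
  - lra.
  - intros c Hc. apply is_derive_Reals. unfold Cfun.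
    assert (0 < sin c) by (apply sin_pos_0PI; lra).
    auto_derive. lra. pose proof (sin2_cos2 c) as SC. unfold Rsqr in SC. field_simplify; try lra. f_equal. replace (cos c ^ 2) with (1 - sin c ^ 2) by (simpl; lra). ring.
  - assert (0 < sin c) by (apply sin_pos_0PI; lra).
    assert (sin c < c) by (apply sin_lt_x; lra).
    pose proof (COS_bound c).
    assert (sin c * cos c - c < 0) by nra.
    assert ((sin c * cos c - c) / sin c ^ 2 < 0).
    { apply Rdiv_neg_pos; [lra| apply pow_lt; lra]. }
    assert ((sin c * cos c - c) / sin c ^ 2 * (y - x) < 0).
    { apply Rmult_neg_pos; lra. }
    lra.
Qed.

Lemma C_exists r : r < 1 -> exists t, 0 < t < PI /\ Cfun t = r.
Proof.
  intros Hr.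
  pose proof PI_RGT_0 as HPI.
  set (H := fun t => t * cos t - r * sin t).
  assert (HC : continuity H).
  { unfold H. apply continuity_minus.
    - apply continuity_mult. apply derivable_continuous, derivable_id. apply continuity_cos.
    - apply continuity_mult. apply continuity_const. intros a b; reflexivity. apply continuity_sin. }
  assert (key : forall t0 t1, 0 < t0 -> t0 < t1 -> t1 < PI -> 0 <= H t0 -> H t1 <= 0 ->
            exists t, 0 < t < PI /\ Cfun t = r).
  { intros t0 t1 a0 a1 a2 b0 b1.
    assert (Hfin : forall t, 0 < t < PI -> H t = 0 -> Cfun t = r).
    { intros t Ht E. pose proof (Cfun_mul t Ht). pose proof (sin_pos_0PI t Ht).
      unfold H in E. apply Rmult_eq_reg_r with (sin t); lra. }
    destruct (Req_dec (H t0) 0) as [E|E].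
    { exists t0. split. lra. apply Hfin; lra. }
    destruct (Req_dec (H t1) 0) as [E'|E'].
    { exists t1. split. lra. apply Hfin; lra. }
    destruct (IVT (fun t => - H t) t0 t1) as [z [Hz Ez]].
    - apply continuity_opp; exact HC.
    - lra.
    - lra.
    - lra.
    - exists z. assert (0 < z < PI) by lra. split; auto. apply Hfin; auto. lra. }
  destruct (Rle_lt_dec 0 r) as [Hr0|Hr0].
  -
    assert (Hb : -1 <= r <= 1) by lra.
    pose proof (acos_bound r) as Ab.
    pose proof (cos_acos r Hb) as Ca.
    assert (acos r <> 0). { intro E. rewrite E, cos_0 in Ca. lra. }
    assert (acos r <= PI/2).
    { destruct (Rle_lt_dec (acos r) (PI/2)); auto.
      assert (cos (acos r) < cos (PI/2)) by (apply cos_decreasing_1; lra).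
      rewrite cos_PI2 in H1. lra. }
    destruct (Req_dec (acos r) (PI/2)) as [E|E].
    { exists (PI/2). split. lra. unfold Cfun. rewrite cos_PI2, sin_PI2.
      rewrite E, cos_PI2 in Ca. rewrite <- Ca. field. }
    apply (key (acos r) (PI/2)); try lra.
    + unfold H. rewrite Ca.
      assert (0 < acos r < PI) by lra.
      pose proof (sin_lt_x (acos r)). pose proof (sin_pos_0PI _ H2). nra.
    + unfold H. rewrite cos_PI2, sin_PI2. lra.
  -
    set (K := Rmax 1 (- 2 * r / PI)).
    assert (K1 : 1 <= K) by apply Rmax_l.
    assert (K2 : - 2 * r / PI <= K) by apply Rmax_r.
    pose proof (atan_bound K) as Ab.
    assert (0 < atan K).
    { rewrite <- atan_0. apply atan_increasing. lra. }
    apply (key (PI/2) (PI/2 + atan K)); try lra.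
    + unfold H. rewrite cos_PI2, sin_PI2. lra.
    + unfold H. rewrite cos_plus, sin_plus, cos_PI2, sin_PI2.
      rewrite cos_atan, sin_atan.
      assert (0 < sqrt (1 + K²)) by (apply sqrt_lt_R0; unfold Rsqr; nra).
      replace ((PI / 2 + atan K) * (0 * (1 / sqrt (1 + K²)) - 1 * (K / sqrt (1 + K²))) -
  r * (1 * (1 / sqrt (1 + K²)) + 0 * (K / sqrt (1 + K²))))
        with (- (((PI / 2 + atan K) * K + r) / sqrt (1 + K²))) by (field; lra).
      assert (- 2 * r <= K * PI).
      { apply Rmult_le_compat_r with (r:=PI) in K2; [|lra].
        replace (- 2 * r / PI * PI) with (-2*r) in K2 by (field; lra). lra. }
      assert (0 <= (PI / 2 + atan K) * K + r) by nra.
      assert (0 <= ((PI / 2 + atan K) * K + r) / sqrt (1 + K²)).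
      { unfold Rdiv; apply Rmult_le_pos; [lra| left; apply Rinv_0_lt_compat; lra]. }
      lra.
Qed.

Lemma Cinv_spec r : r < 1 -> 0 < Defs.Cinv r < PI /\ Cfun (Defs.Cinv r) = r.
Proof.
  intros Hr. unfold Defs.Cinv.
  apply (epsilon_spec (inhabits 0) (fun t => 0 < t < PI /\ Cfun t = r)).
  now apply C_exists.
Qed.

Lemma divp c m s t : 0 < c -> m * c * s < t * c -> m * s < t.
Proof. intros. destruct (Rlt_le_dec (m*s) t); auto.
  assert (0 <= (m*s - t) * c) by (apply Rmult_le_pos; lra). nra. Qed.
Lemma divp' c m s t : 0 < c -> t * c < m * c * s -> t < m * s.
Proof. intros. destruct (Rlt_le_dec t (m*s)); auto.
  assert (0 <= (t - m*s) * c) by (apply Rmult_le_pos; lra). nra. Qed.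
Lemma divn c m s t : c < 0 -> t * c < m * c * s -> m * s < t.
Proof. intros. destruct (Rlt_le_dec (m*s) t); auto.
  assert (0 <= (m*s - t) * (-c)) by (apply Rmult_le_pos; lra). nra. Qed.
Lemma divn' c m s t : c < 0 -> m * c * s < t * c -> t < m * s.
Proof. intros. destruct (Rlt_le_dec t (m*s)); auto.
  assert (0 <= (t - m*s) * (-c)) by (apply Rmult_le_pos; lra). nra. Qed.

Lemma core m th ph : 0 < m -> 0 < th < PI -> 0 < ph < PI ->
  Cfun ph = m * cos th -> (m * sin th < th <-> m * sin ph < ph).
Proof.
  intros Hm Ht Hp E.
  pose proof (sin_pos_0PI _ Ht) as St. pose proof (sin_pos_0PI _ Hp) as Sp.
  pose proof (Cfun_mul _ Ht) as Mt. pose proof (Cfun_mul _ Hp) as Mp.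
  rewrite E in Mp.
  destruct (Rtotal_order th ph) as [L|[Eq|L]].
  - pose proof (C_decr th ph ltac:(lra) L ltac:(lra)) as D.
    assert (cos ph < cos th) by (apply cos_decreasing_1; lra).
    assert (D1 : m * cos th * sin th < th * cos th).
    { assert (m * cos th * sin th < Cfun th * sin th) by (apply Rmult_lt_compat_r; lra). lra. }
    assert (D2 : m * cos ph * sin ph < ph * cos ph).
    { assert (0 < (cos th - cos ph) * (m * sin ph)) by (apply Rmult_lt_0_compat; nra). nra. }
    destruct (Rtotal_order (cos th) 0) as [c|[c|c]].
    + assert (cos ph < 0) by lra.
      assert (th < m * sin th) by (apply (divn' (cos th)); lra).
      assert (ph < m * sin ph) by (apply (divn' (cos ph)); lra). split; intro; lra.
    + rewrite c in D1. lra.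
    + assert (0 < m * cos th * sin ph) by (apply Rmult_lt_0_compat; [apply Rmult_lt_0_compat|]; lra).
      assert (0 < cos ph) by (destruct (Rle_lt_dec (cos ph) 0); [nra|lra]).
      assert (m * sin th < th) by (apply (divp (cos th)); lra).
      assert (m * sin ph < ph) by (apply (divp (cos ph)); lra). tauto.
  - subst. tauto.
  - pose proof (C_decr ph th ltac:(lra) L ltac:(lra)) as D.
    assert (cos th < cos ph) by (apply cos_decreasing_1; lra).
    assert (D1 : th * cos th < m * cos th * sin th).
    { assert (Cfun th * sin th < m * cos th * sin th) by (apply Rmult_lt_compat_r; lra). lra. }
    assert (D2 : ph * cos ph < m * cos ph * sin ph).
    { assert (0 < (cos ph - cos th) * (m * sin ph)) by (apply Rmult_lt_0_compat; nra). nra. }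
    destruct (Rtotal_order (cos th) 0) as [c|[c|c]].
    + assert (m * cos th * sin ph < 0).
      { assert (0 < (- cos th) * (m * sin ph)) by (apply Rmult_lt_0_compat; nra). nra. }
      assert (cos ph < 0) by (destruct (Rlt_le_dec (cos ph) 0); [lra|nra]).
      assert (m * sin th < th) by (apply (divn (cos th)); lra).
      assert (m * sin ph < ph) by (apply (divn (cos ph)); lra). tauto.
    + rewrite c in D1. lra.
    + assert (0 < cos ph) by lra.
      assert (th < m * sin th) by (apply (divp' (cos th)); lra).
      assert (ph < m * sin ph) by (apply (divp' (cos ph)); lra). split; intro; lra.
Qed.

Theorem mainTheorem8 (a w : R) (hw : w < - Rabs a) :
  tau_c a w > 1 <-> (a > -1 /\ - Rfun (- a) < w).
Proof.
  pose proof (Rabs_pos a). pose proof (Rle_abs a). pose proof (Rle_abs (-a)).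
  rewrite Rabs_Ropp in H1.
  set (m := - w). assert (Mw : m = - w) by reflexivity. clearbody m. assert (Hm : 0 < m) by lra.
  set (s := a / w).
  assert (Ea : a = - m * s) by (unfold s; rewrite Mw; field; lra).
  assert (Hs : -1 < s < 1).
  { split.
    - destruct (Rlt_le_dec (-1) s); auto. assert (m * (-1 - s) >= 0) by (apply Rle_ge, Rmult_le_pos; lra). nra.
    - destruct (Rlt_le_dec s 1); auto. assert (m * (s - 1) >= 0) by (apply Rle_ge, Rmult_le_pos; lra). nra. }
  unfold tau_c. fold s.
  set (th := acos s).
  pose proof (acos_bound s) as Ab.
  assert (Cs : cos th = s) by (apply cos_acos; lra).
  assert (Ht : 0 < th < PI).
  { split.
    - destruct (Req_dec th 0) as [E|E]; [|fold th in Ab; lra].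
      rewrite E, cos_0 in Cs. lra.
    - destruct (Req_dec th PI) as [E|E]; [|fold th in Ab; lra].
      rewrite E, cos_PI in Cs. lra. }
  pose proof (sin_pos_0PI _ Ht) as St.
  assert (Sq : sqrt (w ^ 2 - a ^ 2) = m * sin th).
  { rewrite <- (sqrt_square (m * sin th)) by nra. f_equal.
    pose proof (sin2_cos2 th). unfold Rsqr in H2. rewrite Ea. rewrite <- Cs.
    rewrite Mw. nra. }
  rewrite Sq.
  assert (T : th / (m * sin th) > 1 <-> m * sin th < th).
  { assert (0 < m * sin th) by nra.
    set (q := th / (m * sin th)).
    assert (th = q * (m * sin th)) by (unfold q; field; lra).
    split; intro; nra. }
  rewrite T.
  assert (Ma : - a = m * cos th) by (rewrite Cs, Ea; ring).
  assert (Hrf : forall r, r < 1 -> (- Rfun r < w <-> m * sin (Defs.Cinv r) < Defs.Cinv r)).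
  { intros r Hr. destruct (Cinv_spec r Hr) as [Hp _].
    pose proof (sin_pos_0PI _ Hp). unfold Rfun.
    set (q := Defs.Cinv r / sin (Defs.Cinv r)).
    assert (Defs.Cinv r = q * sin (Defs.Cinv r)) by (unfold q; field; lra).
    split; intro; nra. }
  split.
  - intro G.
    assert (L : m * cos th < 1).
    { destruct (Rle_lt_dec (cos th) 0) as [c|c]. nra.
      pose proof (k_pos th Ht). nra. }
    split. lra.
    rewrite Ma. apply Hrf; auto.
    destruct (Cinv_spec (m * cos th) L) as [Hp Ep].
    apply (core m th); auto.
  - intros [G1 G2].
    assert (L : m * cos th < 1) by lra.
    rewrite Ma in G2. apply Hrf in G2; auto.
    destruct (Cinv_spec (m * cos th) L) as [Hp Ep].
    apply (core m th (Defs.Cinv (m * cos th))); auto.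
Qed.
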